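(* Let $\beta>0$ and $\theta>0$, and let $\mathcal{D}=\{(u_1,u_2)\in(0,1)^2:u_1+u_2<1\}$. Define the $2\times2$ matrix $A(u)$ by the requirement that the system $$\partial_tu_1=\operatorname{div}\Big(\nabla(u_1^2)-u_1\nabla\big(u_1^2+\beta\theta u_1u_2^2+\beta u_2^2\big)\Big),\quad \partial_tu_2=\operatorname{div}\Big(\nabla(\beta\theta u_1u_2^2+\beta u_2^2)-u_2\nabla\big(u_1^2+\beta\theta u_1u_2^2+\beta u_2^2\big)\Big)$$ reads $\partial_tu=\operatorname{div}(A(u)\nabla u)$, $u=(u_1,u_2)$. Then, for $\theta>0$ sufficiently large, there exists $(u_1,u_2)\in\mathcal{D}$ with $u_1\in(0,1/3)$, $u_2\in(2/3,1)$ such that at least one eigenvalue of $A(u)$ has a negative real part.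
   Context: This is the tumor-growth model of Jackson and Byrne: the volume-filling multiphase system with $n=2$, unit drag coefficients, $r_{ij}=0$ and intraphase pressures $q_1(u)=q_{11}u_1+q_{12}u_2$, $q_2(u)=q_{21}u_1+q_{22}u_2$ with $q_{11}=1$, $q_{12}=0$, $q_{21}=\beta\theta u_2$, $q_{22}=\beta$; the system is $\partial_tu_i=\operatorname{div}(\nabla(u_iq_i(u))-u_i\sum_j\nabla(u_jq_j(u)))$. *)

(* Defs.v *)
From HB Require Import structures.
From mathcomp Require Import all_boot all_order all_algebra.
From mathcomp Require Import complex.
From mathcomp Require Import reals.
Set Implicit Arguments. Unset Strict Implicit. Unset Printing Implicit Defensive.
Import Order.TTheory GRing.Theory Num.Theory.
Local Open Scope ring_scope.

(* Jackson–Byrne model, n = 2.  With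
     p(u) := u1 q1(u) + u2 q2(u) = u1^2 + beta*theta*u1*u2^2 + beta*u2^2,
   the flux of component i is  grad(u_i q_i(u)) - u_i grad p(u),
   and A(u) is the matrix with  (A(u) grad u)_i = that flux, i.e.
     A_ij(u) = d_j (u_i q_i(u)) - u_i d_j p(u),
   computed explicitly below (d_1 p = 2u1 + beta theta u2^2,
   d_2 p = 2 beta theta u1 u2 + 2 beta u2). *)
Definition Amat (R : realType) (beta theta u1 u2 : R) : 'M[R]_2 :=
  \matrix_(i < 2, j < 2)
    match val i, val j with
    | 0%N, 0%N => 2 * u1 - u1 * (2 * u1 + beta * theta * u2 ^+ 2)
    | 0%N, _   => - u1 * (2 * beta * theta * u1 * u2 + 2 * beta * u2)
    | _, 0%N   => beta * theta * u2 ^+ 2 - u2 * (2 * u1 + beta * theta * u2 ^+ 2)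
    | _, _     => (2 * beta * theta * u1 * u2 + 2 * beta * u2)
                  - u2 * (2 * beta * theta * u1 * u2 + 2 * beta * u2)
    end.

Definition inD (R : realType) (u1 u2 : R) : Prop :=
  0 < u1 < 1 /\ 0 < u2 < 1 /\ u1 + u2 < 1.

(* Main.v *)
Require Import Defs.
From HB Require Import structures.
From mathcomp Require Import all_boot all_order all_algebra.
From mathcomp Require Import complex.
From mathcomp Require Import reals ring lra.
Import Order.TTheory GRing.Theory Num.Theory.
Local Open Scope ring_scope.
Local Open Scope complex_scope.
Lemma det22 (F : comNzRingType) (M : 'M[F]_2) : \det M = M 0 0 * M 1 1 - M 0 1 * M 1 0.
Proof.
rewrite (expand_det_row _ 0) !big_ord_recl big_ord0 /cofactor !det_mx11 !mxE /=.
rewrite addr0 expr0 expr1 !mul1r mulN1r mulrN.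
by congr (_ * _ - _ * _); congr (M _ _); apply: val_inj.
Qed.

Lemma eig22 (R : rcfType) (M : 'M[R]_2) (p q : R) :
  p ^+ 2 - q ^+ 2 - (M 0 0 + M 1 1) * p + (M 0 0 * M 1 1 - M 0 1 * M 1 0) = 0 ->
  q * (2 * p - (M 0 0 + M 1 1)) = 0 ->
  eigenvalue (map_mx (real_complex R) M) (Complex p q).
Proof.
move=> h1 h2.
have H : \det ((Complex p q)%:M - map_mx (real_complex R) M) = 0.
  rewrite det22 !mxE /= !mulr1n !mulr0n !sub0r.
  rewrite [Complex p q]complexE /=.
  set I := 'i%C.
  set a := M 0 0; set b := M 0 1; set c := M 1 0; set d := M 1 1.
  have -> : ((p%:C + I * q%:C) - a%:C) * ((p%:C + I * q%:C) - d%:C) - (- b%:C) * (- c%:C)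
     = (p ^+ 2 - q ^+ 2 - (a + d) * p + (a * d - b * c))%:C + I * (q * (2 * p - (a + d)))%:C
       + (I ^+ 2 + 1) * (q%:C) ^+ 2.
    rewrite !(rmorphD, rmorphB, rmorphN, rmorphM, rmorphXn, rmorph_nat) /=.
    ring.
  by rewrite h1 h2 /I sqr_i addNr mul0r mulr0 !addr0.
apply/eigenvalueP; have /det0P [v vnz Hv] : \det ((Complex p q)%:M - map_mx (real_complex R) M) == 0 by rewrite H.
exists v => //; apply/eqP.
by rewrite -mul_mx_scalar eq_sym -subr_eq0 -mulmxBr Hv.
Qed.

Lemma neg_tr (R : rcfType) (M : 'M[R]_2) : M 0 0 + M 1 1 < 0 ->
  exists lam : R[i], eigenvalue (map_mx (real_complex R) M) lam /\ complex.Re lam < 0.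
Proof.
move=> ht.
set t := M 0 0 + M 1 1 in ht *.
set D := M 0 0 * M 1 1 - M 0 1 * M 1 0.
have [hd|hd] := lerP 0 (t ^+ 2 - 4 * D).
  set s := Num.sqrt (t ^+ 2 - 4 * D).
  have hs : s ^+ 2 = t ^+ 2 - 4 * D by rewrite sqr_sqrtr.
  have s0 : 0 <= s by rewrite sqrtr_ge0.
  exists (Complex ((t - s) / 2) 0); split; last by rewrite /=; lra.
  apply: eig22; last by rewrite mul0r.
  rewrite -/t -/D.
  have -> : ((t - s) / 2) ^+ 2 - 0 ^+ 2 - t * ((t - s) / 2) + D = (s ^+ 2 - (t ^+ 2 - 4 * D)) / 4 by field.
  by rewrite hs subrr mul0r.
set s := Num.sqrt (- (t ^+ 2 - 4 * D)).
have hs : s ^+ 2 = - (t ^+ 2 - 4 * D) by rewrite sqr_sqrtr // oppr_ge0 ltW.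
exists (Complex (t / 2) (s / 2)); split; last by rewrite /=; lra.
apply: eig22; rewrite -/t -/D.
  have -> : (t / 2) ^+ 2 - (s / 2) ^+ 2 - t * (t / 2) + D = - (s ^+ 2 + (t ^+ 2 - 4 * D)) / 4 by field.
  by rewrite hs addNr oppr0 mul0r.
have -> : 2 * (t / 2) - t = 0 by field.
by rewrite mulr0.
Qed.

Theorem lemma10 (R : realType) (beta : R) (hbeta : 0 < beta) :
  exists theta0 : R, forall theta : R, theta0 <= theta -> 0 < theta ->
    exists u1 u2 : R,
      [/\ inD u1 u2, 0 < u1 < 1 / 3, 2 / 3 < u2 < 1 &
        exists lam : R[i],
          eigenvalue (map_mx (real_complex R) (Amat beta theta u1 u2)) lam
          /\ complex.Re lam < 0].
Proof.
exists ((28 + 48 * beta) / (3 * beta) + 1) => theta hth _.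
exists (1 / 8), (3 / 4); split.
- rewrite /inD; lra.
- lra.
- lra.
apply: neg_tr; rewrite !mxE /=.
have e : 3 * beta * ((28 + 48 * beta) / (3 * beta) + 1) = 28 + 51 * beta.
  by field; rewrite gt_eqF // mulr_gt0.
have : 3 * beta * ((28 + 48 * beta) / (3 * beta) + 1) <= 3 * beta * theta.
  by rewrite ler_wpM2l // mulr_ge0 // ltW.
rewrite e => h.
have -> : 2 * (1 / 8) - 1 / 8 * (2 * (1 / 8) + beta * theta * (3 / 4) ^+ 2) +
  (2 * beta * theta * (1 / 8) * (3 / 4) + 2 * beta * (3 / 4) -
   3 / 4 * (2 * beta * theta * (1 / 8) * (3 / 4) + 2 * beta * (3 / 4)))
  = 7 / 32 + 3 * beta / 8 - (3 * beta * theta) / 128 :> R by field.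
lra.
Qed.
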